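(* Let $G=(m,n,\boldsymbol{c},\boldsymbol{d},r_{\max},r_{\min})$ be an interbank lending game, let $\alpha\in(0,1]$, and let $\boldsymbol{s}^1\in\boldsymbol{S}$ be any initial strategy profile. Then the eager $\alpha$-uniform best-response dynamics $(\boldsymbol{s}^t)_{t\in\mathbb{N}}$ started at $\boldsymbol{s}^1$ converges to the unique pure Nash equilibrium $\boldsymbol{s}^*$ of $G$.
   Context: An interbank lending game $G=(m,n,\boldsymbol{c},\boldsymbol{d},r_{\max},r_{\min})$ consists of positive integers $m,n$, budgets $\boldsymbol{c}\in\mathbb{R}_{>0}^m$, demands $\boldsymbol{d}\in\mathbb{R}_{>0}^n$ and reals $0<r_{\min}<r_{\max}$. The players are the lenders $L=\{1,\dots,m\}$; $B=\{1,\dots,n\}$ is the set of borrowers. Lender $i$'s strategy set is $S_i=\{s_i\in\mathbb{R}_{\ge0}^n:\sum_{j\in B}s_{ij}\le c_i\}$, the strategy space is $\boldsymbol{S}=\prod_{i\in L}S_i$ with elements $\boldsymbol{s}=(s_{ij})$. The interest rate of borrower $j$ is $r_j(\boldsymbol{s})=(r_{\min}-r_{\max})\frac{\sum_{i\in L}s_{ij}}{d_j}+r_{\max}$ and lender $i$'s utility is $u_i(\boldsymbol{s})=\sum_{j\in B}(r_j(\boldsymbol{s})-r_{\min})s_{ij}$. A pure Nash equilibrium is $\boldsymbol{s}^*\in\boldsymbol{S}$ with $u_i(\boldsymbol{s}^* )\ge u_i(s_i,\boldsymbol{s}^*_{-i})$ for all $i\in L$, $s_i\in S_i$; $G$ has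 exactly one. For $\boldsymbol{s}\in\boldsymbol{S}$, lender $i$'s best-response set is $\mathrm{BR}_i(\boldsymbol{s})=\arg\max\{u_i(z_i,\boldsymbol{s}_{-i}):z_i\in S_i\}$. The eager $\alpha$-uniform best-response dynamics is a sequence $(\boldsymbol{s}^t)_{t\in\mathbb{N}}$ in $\boldsymbol{S}$ such that for every $t$ there is an updating lender $i^t\in L$ chosen (with ties broken in an arbitrary deterministic way) as one whose best response yields the highest utility increase among all lenders, i.e. $i^t\in\arg\max_{i\in L}\max_{\hat s_i\in\mathrm{BR}_i(\boldsymbol{s}^t)}\bigl(u_i(\hat s_i,\boldsymbol{s}^t_{-i})-u_i(\boldsymbol{s}^t)\bigr)$, and $\boldsymbol{s}^{t+1}=(s^{t+1}_{i^t},\boldsymbol{s}^t_{-i^t})$ with $s^{t+1}_{i^t}=s^t_{i^t}+\alpha(\hat s^t_{i^t}-s^t_{i^t})$ for some $\hat s^t_{i^t}\in\mathrm{BR}_{i^t}(\boldsymbol{s}^t)$. Convergence means $\boldsymbol{s}^t\to\boldsymbol{s}^*$ as $t\to\infty$. *)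

(* Defs.v *)
From HB Require Import structures.
From mathcomp Require Import all_boot all_order all_algebra.
From mathcomp Require Import all_classical all_reals all_analysis.
Set Implicit Arguments. Unset Strict Implicit. Unset Printing Implicit Defensive.
Import Order.TTheory GRing.Theory Num.Theory.
Import numFieldNormedType.Exports.
Local Open Scope ring_scope.

Section IBL.
Variables (R : realType) (m n : nat).
Variables (c : 'I_m -> R) (d : 'I_n -> R) (rmax rmin : R).

(* A strategy profile s = (s_ij) is an m x n matrix; row i is lender i's strategy. *)

Definition rate (s : 'M[R]_(m, n)) (j : 'I_n) : R :=
  (rmin - rmax) * ((\sum_(i < m) s i j) / d j) + rmax.

Definition util (s : 'M[R]_(m, n)) (i : 'I_m) : R :=
  \sum_(j < n) (rate s j - rmin) * s i j.

Definition in_Si (i : 'I_m) (z : 'rV[R]_n) : Prop :=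
  (forall j, 0 <= z 0 j) /\ \sum_(j < n) z 0 j <= c i.

Definition in_S (s : 'M[R]_(m, n)) : Prop := forall i, in_Si i (row i s).

Definition replace_row (s : 'M[R]_(m, n)) (i : 'I_m) (z : 'rV[R]_n) : 'M[R]_(m, n) :=
  \matrix_(k, j) if k == i then z 0 j else s k j.

Definition is_BR (s : 'M[R]_(m, n)) (i : 'I_m) (z : 'rV[R]_n) : Prop :=
  in_Si i z /\
  forall w, in_Si i w -> util (replace_row s i w) i <= util (replace_row s i z) i.

Definition is_NE (s : 'M[R]_(m, n)) : Prop :=
  in_S s /\
  forall i z, in_Si i z -> util (replace_row s i z) i <= util s i.

Definition gain (s : 'M[R]_(m, n)) (i : 'I_m) (z : 'rV[R]_n) : R :=
  util (replace_row s i z) i - util s i.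

Definition eager_uniform_BR (alpha : R) (s : nat -> 'M[R]_(m, n)) : Prop :=
  (forall t, in_S (s t)) /\
  forall t, exists i : 'I_m,
    (exists z, is_BR (s t) i z /\
       forall (k : 'I_m) w, is_BR (s t) k w -> gain (s t) k w <= gain (s t) i z) /\
    exists shat, is_BR (s t) i shat /\
      s t.+1 = replace_row (s t) i (row i (s t) + alpha *: (shat - row i (s t))).

End IBL.

(* Main.v *)
Require Import Defs.
From HB Require Import structures.
From mathcomp Require Import all_boot all_order all_algebra.
From mathcomp Require Import all_classical all_reals all_analysis.
From mathcomp Require Import ring lra.
Import Order.TTheory GRing.Theory Num.Theory.
Import numFieldNormedType.Exports.
Local Open Scope classical_set_scope.
Local Open Scope ring_scope.
Set Implicit Arguments. Unset Strict Implicit.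
Section Aux.
Variables (R : realType) (m n : nat).
Variables (c : 'I_m -> R) (d : 'I_n -> R) (rmax rmin : R).
Hypothesis hd : forall j, 0 < d j.

Definition colS (s : 'M[R]_(m, n)) j := \sum_(k < m) s k j.
Definition sqS (s : 'M[R]_(m, n)) j := \sum_(k < m) s k j ^+ 2.
Definition gg (s : 'M[R]_(m, n)) k j := 1 - (colS s j + s k j) / d j.
Definition Gam (s : 'M[R]_(m, n)) k (z : 'rV[R]_n) :=
  \sum_(j < n) ((z 0 j - s k j) * gg s k j - (z 0 j - s k j) ^+ 2 / d j).
Definition phi (s : 'M[R]_(m, n)) :=
  \sum_(j < n) (colS s j - (colS s j ^+ 2 + sqS s j) / (2 * d j)).

Lemma dneq0 j : d j != 0.
Proof. by rewrite gt_eqF. Qed.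

Lemma replace_rowE (s : 'M[R]_(m, n)) i (z : 'rV[R]_n) k j :
  replace_row s i z k j = if k == i then z 0 j else s k j.
Proof. by rewrite mxE. Qed.

Lemma colS_replace s i z j :
  colS (replace_row s i z) j = colS s j - s i j + z 0 j.
Proof.
rewrite /colS (bigD1 i) //= [in RHS](bigD1 i) //= replace_rowE eqxx.
rewrite (eq_bigr (fun k => s k j)); last by move=> k /negbTE hk; rewrite replace_rowE hk.
ring.
Qed.

Lemma sqS_replace s i z j :
  sqS (replace_row s i z) j = sqS s j - s i j ^+ 2 + z 0 j ^+ 2.
Proof.
rewrite /sqS (bigD1 i) //= [in RHS](bigD1 i) //= replace_rowE eqxx.
rewrite (eq_bigr (fun k => s k j ^+ 2)); last by move=> k /negbTE hk; rewrite replace_rowE hk.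
ring.
Qed.

Lemma util_rewrite s i :
  util d rmax rmin s i = (rmax - rmin) * \sum_(j < n) (1 - colS s j / d j) * s i j.
Proof.
rewrite /util mulr_sumr; apply: eq_bigr => j _; rewrite /rate /colS; ring.
Qed.

Lemma gainE s i z : gain d rmax rmin s i z = (rmax - rmin) * Gam s i z.
Proof.
rewrite /gain !util_rewrite -mulrBr; congr (_ * _).
rewrite -sumrB; apply: eq_bigr => j _.
rewrite colS_replace replace_rowE eqxx /gg; field; exact: dneq0.
Qed.

Lemma phiE s i z : phi (replace_row s i z) = phi s + Gam s i z.
Proof.
rewrite /phi /Gam -big_split /=; apply: eq_bigr => j _.
rewrite colS_replace sqS_replace /gg; field; exact: dneq0.
Qed.

Lemma Gam_row0 s i : Gam s i (row i s) = 0.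
Proof. by rewrite /Gam big1 // => j _; rewrite mxE subrr mul0r expr0n /= mul0r subrr. Qed.

Lemma Gam_dir s s' k (t : R) :
  Gam s k (row k s + t *: (row k s' - row k s)) =
  \sum_(j < n) (t * ((s' k j - s k j) * gg s k j) - t ^+ 2 * ((s' k j - s k j) ^+ 2 / d j)).
Proof.
rewrite /Gam; apply: eq_bigr => j _; rewrite !mxE; ring.
Qed.

Lemma Gam_step s i shat (al : R) : 0 < al -> al <= 1 ->
  al * Gam s i shat <= Gam s i (row i s + al *: (shat - row i s)).
Proof.
move=> a0 a1; rewrite /Gam mulr_sumr -subr_ge0 -sumrB; apply: sumr_ge0 => j _.
rewrite !mxE.
set h := shat 0 j - s i j.
have -> : (s i j + al * h - s i j) * gg s i j - (s i j + al * h - s i j) ^+ 2 / d j -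
  al * (h * gg s i j - h ^+ 2 / d j) = (al - al ^+ 2) * (h ^+ 2 / d j) by ring.
apply: mulr_ge0; last by apply: divr_ge0; [exact: sqr_ge0 | exact: ltW].
rewrite subr_ge0; nra.
Qed.

Lemma in_Si_conv i (x y : 'rV[R]_n) (t : R) : in_Si c i x -> in_Si c i y ->
  0 <= t <= 1 -> in_Si c i (x + t *: (y - x)).
Proof.
move=> [x0 xs] [y0 ys] /andP[t0 t1]; split.
  move=> j; rewrite !mxE.
  have := x0 j; have := y0 j; nra.
under eq_bigr do rewrite !mxE.
have -> : \sum_(j < n) (x 0 j + t * (y 0 j - x 0 j)) =
  (1 - t) * \sum_(j < n) x 0 j + t * \sum_(j < n) y 0 j.
  rewrite !mulr_sumr -big_split; apply: eq_bigr => j _ /=; ring.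
nra.
Qed.

Lemma phi_ub s : in_S c s -> phi s <= \sum_(k < m) c k.
Proof.
move=> hs; apply: (@le_trans _ _ (\sum_(j < n) colS s j)).
  apply: ler_sum => j _; rewrite lerBlDr lerDl; apply: divr_ge0.
    by apply: addr_ge0; [exact: sqr_ge0 | apply: sumr_ge0 => k _; exact: sqr_ge0].
  by apply: mulr_ge0 => //; exact: ltW.
rewrite /colS exchange_big /=; apply: ler_sum => k _.
have [_ h] := hs k; apply: le_trans h; apply: ler_sum => j _; rewrite mxE.
by [].
Qed.

End Aux.
Unset Implicit Arguments. Set Strict Implicit.
Lemma cont_sum (R : realType) (T : topologicalType) (I : Type) (r : seq I)
  (F : I -> T -> R) : (forall i, continuous (F i)) ->
  continuous (fun x => \sum_(i <- r) F i x).
Proof.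
move=> HF; elim: r => [|a r IH].
  have -> : (fun x => \sum_(i <- [::]) F i x) = (fun=> 0) by apply/funext => x; rewrite big_nil.
  by move=> x; exact: cst_continuous.
have -> : (fun x => \sum_(i <- a :: r) F i x) = (F a + fun x => \sum_(i <- r) F i x).
  by apply/funext => x; rewrite big_cons.
by move=> x; apply: continuousD; [exact: HF | exact: IH].
Qed.

Lemma contM (R : realType) (T : topologicalType) (f g : T -> R) :
  continuous f -> continuous g -> continuous (fun x => f x * g x).
Proof. by move=> hf hg x; apply: cvgM; [exact: hf | exact: hg]. Qed.
Lemma contD (R : realType) (T : topologicalType) (f g : T -> R) :
  continuous f -> continuous g -> continuous (fun x => f x + g x).
Proof. by move=> hf hg x; apply: cvgD; [exact: hf | exact: hg]. Qed.
Lemma contC (R : realType) (T : topologicalType) (a : R) :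
  continuous (fun _ : T => a).
Proof. by move=> x; exact: cvg_cst. Qed.

Section BR.
Variables (R : realType) (m n : nat).
Variables (c : 'I_m -> R) (d : 'I_n -> R) (rmax rmin : R).
Hypothesis hc : forall i, 0 < c i.

Lemma BR_exists (s : 'M[R]_(m, n)) i : exists z, is_BR c d rmax rmin s i z.
Proof.
pose A := [set z : 'rV[R]_n | in_Si c i z].
pose f := fun z : 'rV[R]_n => util d rmax rmin (replace_row s i z) i.
have A0 : A !=set0.
  exists 0; split; first by move=> j; rewrite mxE.
  by rewrite big1 ?ltW // => j _; rewrite mxE.
have Aclosed : closed A.
  have -> : A = (\bigcap_(j in setT) [set z : 'rV[R]_n | 0 <= z 0 j]) `&`
                [set z : 'rV[R]_n | \sum_(j < n) z 0 j <= c i].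
    apply/seteqP; split => z /=.
      by move=> [h1 h2]; split => // j _; exact: h1.
    by move=> [h1 h2]; split => // j; exact: h1.
  apply: closedI.
    apply: closed_bigI => j _.
    apply: (@preimage_closed _ _ (fun z : 'rV[R]_n => z 0 j) [set x : R | 0 <= x]).
      by move=> x _; exact: coord_continuous.
    exact: closed_ge.
  apply: (@preimage_closed _ _ (fun z : 'rV[R]_n => \sum_(j < n) z 0 j) [set x : R | x <= c i]).
    move=> x _; apply: cont_sum => j; exact: coord_continuous.
  exact: closed_le.
have Acompact : compact A.
  apply: (subclosed_compact Aclosed (@rV_compact _ _ (fun=> `[0, c i]%classic) (fun _ => @segment_compact _ 0 (c i)))).
  move=> z [h1 h2] j /=; rewrite in_itv /= h1 /=.
  apply: le_trans h2; rewrite (bigD1 j) //= lerDl; apply: sumr_ge0 => k _; exact: h1.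
have fcont : continuous f.
  have -> : f = fun z : 'rV[R]_n => \sum_(j < n)
      (((rmin - rmax) * ((colS s j - s i j + z 0 j) / d j) + (rmax - rmin)) * z 0 j).
    apply/funext => z; rewrite /f /util; apply: eq_bigr => j _.
    rewrite /rate -[\sum_(k < m) _ _ j]/(colS (replace_row s i z) j) colS_replace replace_rowE eqxx.
    ring.
  apply: cont_sum => j.
  apply: contM; last exact: coord_continuous.
  apply: contD; last exact: contC.
  apply: contM; first exact: contC.
  apply: contM; last exact: contC.
  apply: contD; first exact: contC.
  exact: coord_continuous.
have [z zA zmax] := EVT_max_rV A0 Acompact (continuous_subspaceT fcont).
exists z; split; first by move: zA; rewrite inE.
by move=> w hw; apply: zmax; rewrite inE.
Qed.
End BR.
Section Main.
Variables (R : realType) (m n : nat) (c : 'I_m -> R) (d : 'I_n -> R)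
    (rmax rmin : R) (alpha : R) (s : nat -> 'M[R]_(m, n)) (sstar : 'M[R]_(m, n)).
Hypotheses (m0 : (0 < m)%N) (hc : forall i, 0 < c i) (hd : forall j, 0 < d j)
  (hr : rmin < rmax) (ha0 : 0 < alpha) (ha1 : alpha <= 1)
  (hNE : is_NE c d rmax rmin sstar) (hdyn : eager_uniform_BR c d rmax rmin alpha s).

Lemma a0 : 0 < rmax - rmin. Proof. by rewrite subr_gt0. Qed.

Lemma key t k w : in_Si c k w ->
  phi d (s t) + alpha * Gam d (s t) k w <= phi d (s t.+1).
Proof.
move=> hw; have [inS dyn] := hdyn.
have [i [[z [zBR zmax]] [shat [shBR ->]]]] := dyn t.
rewrite (phiE hd).
have H1 : Gam d (s t) k w <= Gam d (s t) i shat.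
  have [zk zkBR] := @BR_exists _ _ _ c d rmax rmin hc (s t) k.
  have e1 : gain d rmax rmin (s t) k w <= gain d rmax rmin (s t) k zk.
    by rewrite /gain lerD2r; exact: zkBR.2 _ hw.
  have e2 := zmax k zk zkBR.
  have e3 : gain d rmax rmin (s t) i z = gain d rmax rmin (s t) i shat.
    rewrite /gain; congr (_ - _); apply/le_anti.
    by rewrite (zBR.2 _ shBR.1) (shBR.2 _ zBR.1).
  have := le_trans e1 e2; rewrite e3 !(gainE rmax rmin hd) => h; have := a0; nra.
have H2 := Gam_step hd (s t) i shat ha0 ha1.
have H3 : alpha * Gam d (s t) k w <= alpha * Gam d (s t) i shat := ler_wpM2l (ltW ha0) H1.
lra.
Qed.

Lemma step_mono t : phi d (s t) <= phi d (s t.+1).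
Proof.
have k0 : 'I_m := Ordinal m0.
have := @key t k0 (row k0 (s t)) (hdyn.1 t k0).
by rewrite Gam_row0 mulr0 addr0.
Qed.

Lemma mono t k : phi d (s t) <= phi d (s (t + k)%N).
Proof.
elim: k => [|k IH]; first by rewrite addn0.
by apply: le_trans IH _; rewrite addnS; exact: step_mono.
Qed.

Lemma vanish eta : 0 < eta -> exists N, forall t, (N <= t)%N ->
  forall k w, in_Si c k w -> Gam d (s t) k w < eta.
Proof.
move=> he.
case: (pselect (exists N, forall t, (N <= t)%N ->
  forall k w, in_Si c k w -> Gam d (s t) k w < eta)) => // HN; exfalso.
have HN' : forall N, exists t k w, (N <= t)%N /\ in_Si c k w /\ eta <= Gam d (s t) k w.
  move=> N; apply: contrapT => H; apply: HN; exists N => t Nt k w hw.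
  rewrite ltNge; apply/negP => hle; apply: H; exists t, k, w; split => //.
have HK : forall K : nat, exists N, phi d (s 0%N) + K%:R * (alpha * eta) <= phi d (s N).
  elim=> [|K [N HN2]]; first by exists 0%N; rewrite mul0r addr0.
  have [t [k [w [Nt [hw he2]]]]] := HN' N.
  exists t.+1; have h1 := @key t k w hw; have := mono N (t - N); rewrite subnKC // => h2.
  have h3 : alpha * eta <= alpha * Gam d (s t) k w := ler_wpM2l (ltW ha0) he2.
  rewrite -addn1 natrD mulrDl mul1r; lra.
set U := \sum_(k < m) c k.
have hU : forall N, phi d (s N) <= U := fun N => phi_ub hd (hdyn.1 N).
have ae : 0 < alpha * eta by apply: mulr_gt0.
have x0 : 0 <= (U - phi d (s 0%N)) / (alpha * eta).
  by apply: divr_ge0; [rewrite subr_ge0; exact: hU | exact: ltW].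
have := archi_boundP x0; rewrite ltr_pdivrMr // => hK.
have [N HN2] := HK (Num.Def.archi_bound ((U - phi d (s 0%N)) / (alpha * eta))).
have := hU N; lra.
Qed.

Lemma single_le (I : finType) (F : I -> R) i : (forall j, 0 <= F j) -> F i <= \sum_j F j.
Proof. by move=> h; rewrite (bigD1 i) //= lerDl; apply: sumr_ge0 => j _. Qed.

Theorem main_conv : s @ \oo --> sstar.
Proof.
apply/cvgrPdist_lt => e e0.
set D := \sum_(j < n) d j.
have hdD : forall j, d j <= D by move=> j; apply: single_le => k; exact: ltW.
have D0 : 0 <= D by apply: sumr_ge0 => j _; exact: ltW.
have m0R : 0 < (m%:R : R) by rewrite ltr0n.
set eta := e ^+ 2 / (8 * m%:R * (D + 1)).
have eta0 : 0 < eta.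
  apply: divr_gt0; first exact: exprn_gt0.
  apply: mulr_gt0; [apply: mulr_gt0 => //|]; lra.
have [N HN] := @vanish eta eta0.
exists N => // t /= Nt.
set x := s t.
have hx : in_S c x := hdyn.1 t.
have hss : in_S c sstar := hNE.1.
pose del k j := sstar k j - x k j.
pose Dl j := colS sstar j - colS x j.
pose Q := \sum_(k < m) \sum_(j < n) del k j ^+ 2 / d j.
have q4a : 0 <= 1 / 4 :> R by lra.
have q4b : 1 / 4 <= 1 :> R by lra.
have q4 : (0 <= 1 / 4 :> R) && (1 / 4 <= 1 :> R) by rewrite q4a q4b.
have HA : forall k, Gam d x k (row k x + (1/4) *: (row k sstar - row k x)) <= eta.
  move=> k; apply/ltW/HN => //; apply: in_Si_conv; [exact: hx k | exact: hss k | exact: q4].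
have HB : forall k, Gam d sstar k (row k sstar + (1/4) *: (row k x - row k sstar)) <= 0.
  move=> k.
  have := hNE.2 k _ (in_Si_conv (hss k) (hx k) q4).
  rewrite -subr_le0 -/(gain d rmax rmin sstar k _) (gainE rmax rmin hd) pmulr_rle0 //; exact: a0.
have HE : forall k, Gam d x k (row k x + (1/4) *: (row k sstar - row k x)) +
    Gam d sstar k (row k sstar + (1/4) *: (row k x - row k sstar)) =
    \sum_(j < n) (del k j * Dl j / (4 * d j) + del k j ^+ 2 / (8 * d j)).
  move=> k; rewrite !Gam_dir -big_split /=; apply: eq_bigr => j _.
  rewrite /gg /del /Dl; field; exact: dneq0.
have HS1 : \sum_(k < m) \sum_(j < n) del k j * Dl j / (4 * d j) =
    \sum_(j < n) Dl j ^+ 2 / (4 * d j).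
  rewrite exchange_big; apply: eq_bigr => j _.
  have HD : Dl j = \sum_(k < m) del k j by rewrite /Dl /colS -sumrB.
  by rewrite -!mulr_suml -HD expr2.
have HS2 : \sum_(k < m) \sum_(j < n) del k j ^+ 2 / (8 * d j) = Q / 8.
  rewrite /Q mulr_suml; apply: eq_bigr => k _; rewrite mulr_suml; apply: eq_bigr => j _.
  field; exact: dneq0.
have HS0 : 0 <= \sum_(j < n) Dl j ^+ 2 / (4 * d j).
  apply: sumr_ge0 => j _; apply: divr_ge0; first exact: sqr_ge0.
  apply: mulr_ge0; [lra | exact: ltW].
have Hsum : \sum_(k < m) (Gam d x k (row k x + (1/4) *: (row k sstar - row k x)) +
    Gam d sstar k (row k sstar + (1/4) *: (row k x - row k sstar))) <= m%:R * eta.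
  have Hc : \sum_(k < m) eta = m%:R * eta by rewrite sumr_const card_ord mulr_natl.
  rewrite -Hc; apply: ler_sum => k _; have := HA k; have := HB k; lra.
have HQ : Q <= 8 * m%:R * eta.
  move: Hsum; rewrite (eq_bigr _ (fun k _ => HE k)).
  have -> : \sum_(k < m) \sum_(j < n) (del k j * Dl j / (4 * d j) + del k j ^+ 2 / (8 * d j))
     = \sum_(j < n) Dl j ^+ 2 / (4 * d j) + Q / 8.
    rewrite -HS1 -HS2 -big_split /=; apply: eq_bigr => k _; by rewrite big_split.
  lra.
have Q0 : 0 <= Q.
  apply: sumr_ge0 => k _; apply: sumr_ge0 => j _; apply: divr_ge0; [exact: sqr_ge0 | exact: ltW].
have Hent : forall k j, del k j ^+ 2 < e ^+ 2.
  move=> k j.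
  have h1 : del k j ^+ 2 / d j <= Q.
    have h1a : del k j ^+ 2 / d j <= \sum_(j' < n) del k j' ^+ 2 / d j'.
      apply: (@single_le _ (fun j' => del k j' ^+ 2 / d j') j) => j'.
      apply: divr_ge0; [exact: sqr_ge0 | exact: ltW].
    apply: le_trans h1a _.
    apply: (@single_le _ (fun k' => \sum_(j' < n) del k' j' ^+ 2 / d j') k) => k'.
    apply: sumr_ge0 => j' _; apply: divr_ge0; [exact: sqr_ge0 | exact: ltW].
  move: h1; rewrite ler_pdivrMr // => h1.
  have h2 : Q * d j <= 8 * m%:R * eta * D.
    apply: le_trans (_ : Q * D <= _).
      by apply: ler_wpM2l.
    by apply: ler_wpM2r.
  have h3 : 8 * m%:R * eta * (D + 1) = e ^+ 2.
    have hD1 : 0 < D + 1 by lra.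
    rewrite /eta; field; by rewrite (gt_eqF hD1) (gt_eqF m0R).
  have h4 : 0 < 8 * m%:R * eta by apply: mulr_gt0 => //; apply: mulr_gt0 => //; lra.
  nra.
have -> : `|sstar - x| = mx_norm (sstar - x) by [].
rewrite mx_normrE; apply: bigmax_lt => // ij _.
rewrite !mxE; have := Hent ij.1 ij.2; rewrite /del => h.
apply/ltr_normlP; split; nra.
Qed.
End Main.

Theorem theorem4p1 (R : realType) (m n : nat) (c : 'I_m -> R) (d : 'I_n -> R)
    (rmax rmin : R) (alpha : R) (s : nat -> 'M[R]_(m, n)) (sstar : 'M[R]_(m, n)) :
  (0 < m)%N -> (0 < n)%N ->
  (forall i, 0 < c i) -> (forall j, 0 < d j) ->
  0 < rmin -> rmin < rmax ->
  0 < alpha -> alpha <= 1 ->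
  is_NE c d rmax rmin sstar ->
  eager_uniform_BR c d rmax rmin alpha s ->
  s @ \oo --> sstar.
Proof.
move=> m0 n0 hc hd hrmin hr ha0 ha1 hNE hdyn.
exact: (@main_conv R m n c d rmax rmin alpha s sstar m0 hc hd hr ha0 ha1 hNE hdyn).
Qed.
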